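(* For any rooted tree $T$, it is possible to assign pairwise distinct binary strings $\ell(u)$ to all nodes $u\in T$ such that $$|\ell(u)|\le 2+\log_2\big(|T|/(1+\mathsf{deg}(u))\big)$$ for every node $u$.
   Context: $|T|$ is the number of nodes of $T$, $\mathsf{deg}(u)$ is the number of children of $u$, and $|\ell(u)|$ is the length of the string $\ell(u)$. *)

(* Defs.v *)
From Stdlib Require Import Reals List Arith.
Import ListNotations.

Inductive tree : Type := Node : list tree -> tree.

Definition children (t : tree) : list tree := match t with Node ts => ts end.

(* Nodes of a tree are identified by their address: the sequence of child
   indices along the path from the root.  [subtree T u] is the subtree rooted
   at node u, or None if u is not an address of a node of T. *)
Fixpoint subtree (t : tree) (u : list nat) : option tree :=
  match u with
  | [] => Some t
  | i :: u' => match nth_error (children t) i with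
               | Some c => subtree c u'
               | None => None
               end
  end.

Definition is_node (T : tree) (u : list nat) : Prop := subtree T u <> None.

Fixpoint tsize (t : tree) : nat :=
  match t with
  | Node ts => S ((fix go (l : list tree) : nat :=
                     match l with [] => 0 | c :: cs => tsize c + go cs end) ts)
  end.

Definition deg (t : tree) : nat := length (children t).

Definition log2R (x : R) : R := ln x / ln 2.

(* Main.v *)
Require Import Defs.
From Stdlib Require Import Reals List Arith Lia Lra PArith.
Import ListNotations.
Local Open Scope bool_scope.

Fixpoint tree_ind' (P : tree -> Prop) (H : forall ts, Forall P ts -> P (Node ts)) (t : tree) : P t :=
  match t with
  | Node ts => H ts ((fix f (l : list tree) : Forall P l :=
                        match l with
                        | [] => Forall_nil _
                        | c :: cs => Forall_cons _ (tree_ind' P H c) (f cs)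
                        end) ts)
  end.

Fixpoint go (f : tree -> list (list nat)) (i : nat) (l : list tree) : list (list nat) :=
  match l with
  | [] => []
  | c :: cs => map (cons i) (f c) ++ go f (S i) cs
  end.

Fixpoint nodes (t : tree) : list (list nat) :=
  match t with Node ts => [] :: go nodes 0 ts end.

Fixpoint sizes (l : list tree) : nat :=
  match l with [] => 0 | c :: cs => tsize c + sizes cs end.

Lemma tsize_Node ts : tsize (Node ts) = S (sizes ts).
Proof. induction ts as [|c cs IH]; simpl; auto. Qed.

Fixpoint sumF (F : list nat -> nat) (L : list (list nat)) : nat :=
  match L with [] => 0 | x :: xs => F x + sumF F xs end.

Lemma sumF_app F a b : sumF F (a ++ b) = sumF F a + sumF F b.
Proof. induction a; simpl; lia. Qed.

Lemma sumF_map F g L : sumF F (map g L) = sumF (fun x => F (g x)) L.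
Proof. induction L; simpl; lia. Qed.

Lemma sumF_ext F G L : (forall x, F x = G x) -> sumF F L = sumF G L.
Proof. intros H; induction L; simpl; auto. Qed.

Lemma sumF_filter F p L : sumF F (filter p L) <= sumF F L.
Proof. induction L; simpl; auto. destruct (p a); simpl; lia. Qed.

Lemma sumF_lower F a L : (forall x, In x L -> a <= F x) -> length L * a <= sumF F L.
Proof.
  induction L; simpl; intros H; auto.
  specialize (IHL (fun x Hx => H x (or_intror Hx))). specialize (H a0 (or_introl eq_refl)). lia.
Qed.

Definition dg (T : tree) (v : list nat) : nat :=
  match subtree T v with Some t => deg t | None => 0 end.

Lemma go_in : forall l i j c u, nth_error l i = Some c -> In u (nodes c) -> In ((j + i) :: u) (go nodes j l).
Proof.
  induction l as [|c0 cs IH]; intros i j c u H1 H2; [destruct i; discriminate|].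
  destruct i as [|i]; simpl in *.
  - injection H1 as <-. apply in_or_app. left. rewrite Nat.add_0_r. apply in_map. auto.
  - apply in_or_app. right. replace (j + S i) with (S j + i) by lia. eapply IH; eauto.
Qed.

Lemma in_nodes : forall u T t, subtree T u = Some t -> In u (nodes T).
Proof.
  induction u as [|i u IH]; intros [ts] t H; simpl; auto.
  right. simpl in H. destruct (nth_error ts i) eqn:E; [|discriminate].
  apply (go_in ts i 0 t0 u E). eapply IH; eauto.
Qed.

Lemma go_sum : forall ts0 l j,
  (forall k, nth_error ts0 (j + k) = nth_error l k) ->
  Forall (fun c => sumF (fun v => 1 + dg c v) (nodes c) + 1 <= 2 * tsize c) l ->
  sumF (fun v => 1 + dg (Node ts0) v) (go nodes j l) + length l <= 2 * sizes l.
Proof.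
  induction l as [|c cs IH]; intros j Hk HF; simpl; auto.
  inversion HF; subst.
  rewrite sumF_app, sumF_map.
  assert (E : sumF (fun x => 1 + dg (Node ts0) (j :: x)) (nodes c) = sumF (fun v => 1 + dg c v) (nodes c)).
  { apply sumF_ext. intros x. unfold dg. simpl. specialize (Hk 0). rewrite Nat.add_0_r in Hk. rewrite Hk. reflexivity. }
  simpl in E |- *. rewrite E.
  assert (Hk' : forall k, nth_error ts0 (S j + k) = nth_error cs k).
  { intros k. replace (S j + k) with (j + S k) by lia. rewrite Hk. reflexivity. }
  specialize (IH (S j) Hk' H2). simpl in *. lia.
Qed.

Lemma sum_nodes : forall T, sumF (fun v => 1 + dg T v) (nodes T) + 1 <= 2 * tsize T.
Proof.
  apply tree_ind'. intros ts H. rewrite tsize_Node. simpl.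
  assert (Hs := go_sum ts ts 0 (fun k => eq_refl) H).
  unfold dg at 1. simpl. unfold deg. simpl. simpl in *. lia.
Qed.

Fixpoint lexle (a b : list nat) : bool :=
  match a, b with
  | [], _ => true
  | _ :: _, [] => false
  | x :: a', y :: b' => (x <? y) || ((x =? y) && lexle a' b')
  end.

Lemma lexle_refl a : lexle a a = true.
Proof. induction a; simpl; auto. rewrite Nat.eqb_refl, IHa. apply Bool.orb_true_r. Qed.

Lemma lexle_total : forall a b, lexle a b = true \/ lexle b a = true.
Proof.
  induction a as [|x a IH]; intros [|y b]; simpl; auto.
  destruct (Nat.lt_trichotomy x y) as [H|[H|H]].
  - left. apply Nat.ltb_lt in H. rewrite H. auto.
  - subst. rewrite Nat.eqb_refl, Nat.ltb_irrefl. simpl. apply IH.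
  - right. apply Nat.ltb_lt in H. rewrite H. auto.
Qed.

Lemma lexle_antisym : forall a b, lexle a b = true -> lexle b a = true -> a = b.
Proof.
  induction a as [|x a IH]; intros [|y b]; simpl; auto; try discriminate.
  intros H1 H2. apply Bool.orb_true_iff in H1, H2.
  destruct H1 as [H1|H1]; destruct H2 as [H2|H2];
  repeat match goal with
  | H : (_ <? _) = true |- _ => apply Nat.ltb_lt in H
  | H : (_ && _) = true |- _ => apply Bool.andb_true_iff in H; destruct H
  | H : (_ =? _) = true |- _ => apply Nat.eqb_eq in H
  end; try lia. subst. f_equal. auto.
Qed.

Lemma lexle_trans : forall a b c, lexle a b = true -> lexle b c = true -> lexle a c = true.
Proof.
  induction a as [|x a IH]; intros [|y b] [|z c]; simpl; auto; try discriminate.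
  intros H1 H2. apply Bool.orb_true_iff in H1, H2. apply Bool.orb_true_iff.
  destruct H1 as [H1|H1]; destruct H2 as [H2|H2];
  repeat match goal with
  | H : (_ <? _) = true |- _ => apply Nat.ltb_lt in H
  | H : (_ && _) = true |- _ => apply Bool.andb_true_iff in H; destruct H
  | H : (_ =? _) = true |- _ => apply Nat.eqb_eq in H
  end; subst.
  - left. apply Nat.ltb_lt. lia.
  - left. apply Nat.ltb_lt. lia.
  - left. apply Nat.ltb_lt. lia.
  - right. rewrite Nat.eqb_refl. simpl. eauto.
Qed.

Definition lek (T : tree) (u v : list nat) : bool :=
  (dg T v <? dg T u) || ((dg T v =? dg T u) && lexle u v).

Lemma lek_iff T u v : lek T u v = true <-> dg T v < dg T u \/ (dg T v = dg T u /\ lexle u v = true).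
Proof.
  unfold lek. rewrite Bool.orb_true_iff, Bool.andb_true_iff, Nat.ltb_lt, Nat.eqb_eq. tauto.
Qed.

Lemma lek_refl T u : lek T u u = true.
Proof. apply lek_iff. right. split; auto. apply lexle_refl. Qed.

Lemma lek_total T u v : lek T u v = true \/ lek T v u = true.
Proof.
  rewrite !lek_iff. destruct (Nat.lt_trichotomy (dg T u) (dg T v)) as [h|[h|h]]; [right; left; exact h| |left; left; exact h]. destruct (lexle_total u v); [left|right]; right; split; auto.
Qed.

Lemma lek_antisym T u v : lek T u v = true -> lek T v u = true -> u = v.
Proof.
  rewrite !lek_iff. intros H1 H2.
  destruct H1 as [H1|[H1 H1']]; destruct H2 as [H2|[H2 H2']]; try lia.
  apply lexle_antisym; auto.
Qed.

Lemma lek_trans T u v w : lek T u v = true -> lek T v w = true -> lek T u w = true.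
Proof.
  rewrite !lek_iff. intros H1 H2.
  destruct H1 as [H1|[H1 H1']]; destruct H2 as [H2|[H2 H2']]; try lia.
  right. split; [lia|]. eapply lexle_trans; eauto.
Qed.

Lemma filter_lt {A} (p q : A -> bool) L y :
  (forall x, In x L -> p x = true -> q x = true) -> In y L -> q y = true -> p y = false ->
  length (filter p L) < length (filter q L).
Proof.
  induction L as [|a L IH]; simpl; intros H Hy Hq Hp; [contradiction|].
  assert (Hle : length (filter p L) <= length (filter q L)).
  { clear -H. induction L as [|b L IHL]; simpl; auto.
    destruct (p b) eqn:E.
    - rewrite (H b (or_intror (or_introl eq_refl)) E). simpl.
      apply le_n_S. apply IHL. intros x Hx. apply H. destruct Hx; auto. right; right; auto.
    - destruct (q b); simpl; [apply le_S|]; apply IHL; intros x Hx; apply H; destruct Hx; auto; right; right; auto. }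
  destruct Hy as [<-|Hy].
  - rewrite Hp, Hq. simpl. lia.
  - specialize (IH (fun x Hx => H x (or_intror Hx)) Hy Hq Hp).
    destruct (p a) eqn:E.
    + rewrite (H a (or_introl eq_refl) E). simpl. lia.
    + destruct (q a); simpl; lia.
Qed.

Fixpoint pbits (p : positive) : list bool :=
  match p with
  | xH => []
  | xO q => false :: pbits q
  | xI q => true :: pbits q
  end.

Lemma pbits_inj : forall p q, pbits p = pbits q -> p = q.
Proof.
  induction p; intros [q|q|]; simpl; intros H; try discriminate; auto;
  injection H as H; f_equal; auto.
Qed.

Lemma pbits_len : forall p, 2 ^ length (pbits p) <= Pos.to_nat p.
Proof.
  induction p; simpl.
  - rewrite Pos2Nat.inj_xI. lia.
  - rewrite Pos2Nat.inj_xO. lia.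
  - rewrite Pos2Nat.inj_1. auto.
Qed.

Definition rk (T : tree) (v : list nat) : nat := length (filter (fun w => lek T w v) (nodes T)).

Lemma rk_pos T v : In v (nodes T) -> rk T v <> 0.
Proof.
  unfold rk. intros H. assert (In v (filter (fun w => lek T w v) (nodes T))).
  { apply filter_In. split; auto. apply lek_refl. }
  destruct (filter _ _); simpl in *; [contradiction|lia].
Qed.

Lemma rk_bound T v : rk T v * (1 + dg T v) <= 2 * tsize T.
Proof.
  unfold rk.
  assert (H1 := sumF_lower (fun w => 1 + dg T w) (1 + dg T v) (filter (fun w => lek T w v) (nodes T))).
  assert (H2 := sumF_filter (fun w => 1 + dg T w) (fun w => lek T w v) (nodes T)).
  assert (H3 := sum_nodes T).
  enough (length (filter (fun w => lek T w v) (nodes T)) * (1 + dg T v) <=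
          sumF (fun w => 1 + dg T w) (filter (fun w => lek T w v) (nodes T))) by lia.
  apply H1. intros x Hx. apply filter_In in Hx. destruct Hx as [_ Hx].
  apply lek_iff in Hx. lia.
Qed.

Theorem lemma9 (T : tree) :
  exists l : list nat -> list bool,
    (forall u v, is_node T u -> is_node T v -> l u = l v -> u = v) /\
    (forall (u : list nat) (t : tree), subtree T u = Some t ->
       (INR (length (l u)) <= 2 + log2R (INR (tsize T) / INR (1 + deg t)))%R).
Proof.
  exists (fun u => pbits (Pos.of_nat (rk T u))). split.
  - intros u v Hu Hv H.
    assert (Iu : In u (nodes T)) by (destruct (subtree T u) eqn:E; [eapply in_nodes; eauto|contradiction]).
    assert (Iv : In v (nodes T)) by (destruct (subtree T v) eqn:E; [eapply in_nodes; eauto|contradiction]).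
    apply pbits_inj, Nat2Pos.inj in H; try (apply rk_pos; auto).
    destruct (list_eq_dec Nat.eq_dec u v) as [|Hne]; auto. exfalso.
    assert (forall a b, In b (nodes T) -> lek T a b = true -> lek T b a = false -> rk T a < rk T b).
    { intros a b Ib H1 H2. unfold rk. eapply filter_lt; eauto.
      - intros x _ Hx. eapply lek_trans; eauto.
      - apply lek_refl. }
    destruct (lek_total T u v) as [Huv|Hvu].
    + destruct (lek T v u) eqn:E. { apply Hne. apply lek_antisym with T; auto. }
      specialize (H0 u v Iv Huv E). lia.
    + destruct (lek T u v) eqn:E. { apply Hne. apply lek_antisym with T; auto. }
      specialize (H0 v u Iu Hvu E). lia.
  - intros u t Ht.
    assert (Iu := in_nodes u T t Ht).
    assert (Hr := rk_bound T u). assert (Hp := rk_pos T u Iu).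
    assert (Hl := pbits_len (Pos.of_nat (rk T u))). rewrite Nat2Pos.id in Hl by auto.
    unfold dg in Hr. rewrite Ht in Hr.
    set (len := length (pbits (Pos.of_nat (rk T u)))) in *.
    set (d := deg t) in *. set (n := tsize T) in *.
    assert (Hkey : 2 ^ len * (1 + d) <= 2 * n) by nia.
    apply le_INR in Hkey. rewrite !mult_INR, pow_INR, plus_INR in Hkey.
    replace (INR 2) with 2%R in Hkey by (simpl; lra). rewrite INR_1 in Hkey.
    rewrite plus_INR, INR_1.
    assert (Hd : (0 <= INR d)%R) by apply pos_INR.
    assert (Hn : (0 < INR n)%R).
    { apply lt_0_INR. unfold n. destruct T; rewrite tsize_Node; lia. }
    assert (Hln2 : (0 < ln 2)%R) by (assert (H := ln_lt_2); lra).
    unfold log2R.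
    assert (HP : (0 < 2 ^ len)%R) by (apply pow_lt; lra).
    assert (Hq : (0 < INR n / (1 + INR d))%R) by (apply Rdiv_lt_0_compat; lra).
    assert (Hle : (2 ^ len <= 4 * (INR n / (1 + INR d)))%R).
    { apply Rmult_le_reg_r with (1 + INR d)%R; [lra|].
      unfold Rdiv. rewrite Rmult_assoc, Rmult_assoc, Rinv_l by lra. lra. }
    assert (Hlnle : (ln (2 ^ len) <= ln (4 * (INR n / (1 + INR d))))%R).
    { destruct (Rle_lt_or_eq_dec _ _ Hle) as [Hlt|Heq].
      - left. apply ln_increasing; auto.
      - right. rewrite Heq. reflexivity. }
    rewrite ln_pow in Hlnle by lra.
    rewrite ln_mult in Hlnle by lra.
    replace 4%R with (2 ^ 2)%R in Hlnle by lra.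
    rewrite ln_pow in Hlnle by lra. simpl INR in Hlnle.
    apply Rmult_le_reg_r with (ln 2); auto.
    rewrite Rmult_plus_distr_r. unfold Rdiv. rewrite Rmult_assoc, Rinv_l by lra. lra.
Qed.
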